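(* The graph $\mathcal{G}_3$ has finitely many connected components.
   Context: A square is a finite non-empty word of the form $XX$. A square reduction replaces a word $UXXV$ (with $X$ non-empty) by $UXV$. For $k\geqslant 1$, $\mathcal{G}_k$ is the undirected graph whose vertices are all finite non-empty words over a fixed $k$-letter alphabet, where two words $U,W$ are adjacent whenever one of them can be obtained from the other by a single square reduction. *)

(* Defs.v *)
From mathcomp Require Import all_boot.
Set Implicit Arguments. Unset Strict Implicit. Unset Printing Implicit Defensive.

Definition word (k : nat) := seq 'I_k.

Definition square_reduction (k : nat) (W U : word k) : Prop :=
  exists (u x v : word k), x <> [::] /\ W = u ++ x ++ x ++ v /\ U = u ++ x ++ v.

Definition Gk_adj (k : nat) (U W : word k) : Prop :=
  U <> [::] /\ W <> [::] /\ (square_reduction U W \/ square_reduction W U).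

Inductive Gk_connected (k : nat) : word k -> word k -> Prop :=
| Gk_refl (w : word k) : Gk_connected w w
| Gk_step (u v w : word k) : Gk_adj u v -> Gk_connected v w -> Gk_connected u w.

Definition Gk_finitely_many_components (k : nat) : Prop :=
  exists reps : seq (word k),
    (forall r, r \in reps -> r <> [::]) /\
    forall w : word k, w <> [::] -> exists2 r, r \in reps & Gk_connected w r.

(* Main.v *)
Require Import Defs.
From mathcomp Require Import all_boot.
From mathcomp Require Import zify.
Set Implicit Arguments. Unset Strict Implicit. Unset Printing Implicit Defensive.

Section Band.
Variable k : nat.
Local Notation con := (@Gk_connected k).
Implicit Types u v w x y z : word k.

Lemma adj_sym u v : Gk_adj u v -> Gk_adj v u.
Proof. by case=> [h1 [h2 h3]]; split=> //; split=> //; tauto. Qed.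

Lemma con_trans u v w : con u v -> con v w -> con u w.
Proof. elim=> // a b c h _ IH /IH; exact: Gk_step. Qed.

Lemma con_sym u v : con u v -> con v u.
Proof.
elim=> [w|a b c h _ IH]; first exact: Gk_refl.
apply: con_trans IH _; apply: Gk_step (adj_sym h) (Gk_refl _).
Qed.

Lemma cat_nil_neq l u r : u <> [::] -> l ++ u ++ r <> [::].
Proof. by case: l => //; case: u. Qed.

Lemma sr_ctx l r (W U : word k) : square_reduction W U ->
  square_reduction (l ++ W ++ r) (l ++ U ++ r).
Proof.
case=> [a [x [b [hx [-> ->]]]]]; exists (l ++ a), x, (b ++ r).
by split=> //; rewrite !catA.
Qed.

Lemma con_ctx l r u v : con u v -> con (l ++ u ++ r) (l ++ v ++ r).
Proof.
elim=> [w|a b c h _ IH]; first exact: Gk_refl.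
apply: Gk_step IH; case: h => [h1 [h2 h3]].
split; first exact: cat_nil_neq.
split; first exact: cat_nil_neq.
by case: h3 => h; [left|right]; apply: sr_ctx.
Qed.

Lemma con_l l u v : con u v -> con (l ++ u) (l ++ v).
Proof. by move=> h; have := con_ctx l [::] h; rewrite !cats0. Qed.

Lemma con_r r u v : con u v -> con (u ++ r) (v ++ r).
Proof. by move=> h; have := con_ctx [::] r h. Qed.

Lemma sq x : con (x ++ x) x.
Proof.
case: x => [|c x]; first exact: Gk_refl.
apply: Gk_step (Gk_refl _); split=> //; split=> //; left.
by exists [::], (c :: x), [::]; rewrite !cats0.
Qed.

Lemma con_nil u v : con u v -> u <> [::] -> v <> [::].
Proof. by elim=> // a b c [_ [h _]] _ IH _; apply: IH. Qed.

Lemma split_mem (a : 'I_k) x : a \in x -> exists u v, x = u ++ a :: v.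
Proof.
elim: x => // b x IH; rewrite inE => /orP [/eqP ->|/IH [u [v ->]]].
  by exists [::], x.
by exists (b :: u), v.
Qed.

Lemma keyK s w t : con (s ++ w ++ t) ((s ++ w ++ t) ++ (s ++ t) ++ (s ++ w ++ t)).
Proof.
apply: con_trans (con_sym (sq _)) _.
have e1 : (s ++ w ++ t) ++ (s ++ w ++ t) = (s ++ w) ++ (t ++ s) ++ (w ++ t)
  by rewrite !catA.
have e2 : (s ++ w ++ t) ++ (s ++ t) ++ (s ++ w ++ t)
   = (s ++ w) ++ (t ++ (s ++ t) ++ s) ++ (w ++ t) by rewrite !catA.
rewrite e1 e2; apply: con_ctx.
have := con_sym (sq (t ++ s)); by rewrite !catA.
Qed.

Lemma Jlem y : y <> [::] -> forall x, {subset y <= x} ->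
  exists u v, con x (u ++ y ++ v).
Proof.
elim: y => // a y IH _ x sub.
have /split_mem [u' [v' ex]] : a \in x by apply: sub; rewrite inE eqxx.
case: y IH sub => [|c y] IH sub.
  by exists u', v'; rewrite ex; exact: Gk_refl.
have [u [v hx]] : exists u v, con x (u ++ (c :: y) ++ v).
  apply: IH => // z zi; apply: sub; by rewrite inE zi orbT.
set t := c :: y in hx *.
exists (u' ++ ([:: a] ++ (v' ++ u) ++ t)), (([:: a] ++ (v' ++ u) ++ t) ++ v).
apply: con_trans (con_sym (sq x)) _.
have : con (x ++ x) (u' ++ ([:: a] ++ (v' ++ u) ++ t) ++ v).
  apply: con_trans (con_l x hx) _.
  have -> : x ++ u ++ t ++ v = u' ++ ([:: a] ++ (v' ++ u) ++ t) ++ v.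
    by rewrite {1}ex -!catA.
  exact: Gk_refl.
move=> h; apply: con_trans h _.
have h2 := con_ctx u' v (keyK [:: a] (v' ++ u) t).
by rewrite -!catA /= in h2 *.
Qed.


Lemma rect x y : x <> [::] -> {subset y <= x} -> con (x ++ y ++ x) x.
Proof.
move=> xn sub.
have [u [v h]] : exists u v, con x (u ++ (x ++ y) ++ v).
  apply: Jlem; first by case: (x) xn.
  by move=> z; rewrite mem_cat => /orP [] // /sub.
have hu : con (u ++ x) x.
  apply: con_trans (con_l u h) _.
  rewrite catA; apply: con_trans (con_r _ (sq u)) _.
  exact: con_sym h.
have h3 : con x (x ++ y ++ v).
  apply: con_trans h _; rewrite -!catA catA; exact: con_r.
rewrite catA; apply: con_trans (con_l (x ++ y) h3) _.
have -> : (x ++ y) ++ x ++ y ++ v = ((x ++ y) ++ (x ++ y)) ++ v by rewrite -!catA.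
apply: con_trans (con_r _ (sq _)) _; rewrite -catA; exact: con_sym.
Qed.

Lemma normal w X q r Z : X <> [::] -> Z <> [::] -> w = X ++ q -> w = r ++ Z ->
  {subset w <= X} -> {subset w <= Z} -> con w (X ++ Z).
Proof.
move=> Xn Zn e1 e2 sX sZ.
apply: con_trans (con_sym (sq w)) _.
have -> : w ++ w = (X ++ q ++ r) ++ Z by rewrite {1}e1 {1}e2 -!catA.
have hZ : con Z (Z ++ X ++ Z).
  apply: con_sym; apply: rect => // z zX; apply: sZ; rewrite e1 mem_cat zX //.
apply: con_trans (con_l (X ++ q ++ r) hZ) _.
have -> : (X ++ q ++ r) ++ Z ++ X ++ Z = (X ++ ((q ++ r) ++ Z) ++ X) ++ Z
  by rewrite -!catA.
apply: con_r; apply: rect => // z; rewrite !mem_cat => hz; apply: sX.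
move: hz => /orP [/orP [] zi|zi].
- by rewrite e1 mem_cat zi orbT.
- by rewrite e2 mem_cat zi.
- by rewrite e2 mem_cat zi orbT.
Qed.

Lemma prefix_split w (x : 'I_k) : exists p (a : 'I_k) q,
  [/\ rcons w x = p ++ a :: q, a \notin p & {subset rcons w x <= rcons p a}].
Proof.
elim/last_ind: w x => [|w y IH] x.
  by exists [::], x, [::]; split=> // z.
case: (boolP (x \in rcons w y)) => hx.
  have [p [a [q [e na sub]]]] := IH y.
  exists p, a, (rcons q x); split=> //.
    by rewrite e rcons_cat.
  move=> z; rewrite mem_rcons inE => /orP [/eqP ->|]; last exact: sub.
  exact: sub.
exists (rcons w y), x, [::]; split=> //.
by rewrite cats1.
Qed.

Lemma prefix_split' w : w <> [::] -> exists p (a : 'I_k) q,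
  [/\ w = p ++ a :: q, a \notin p & {subset w <= rcons p a}].
Proof.
case/lastP: w => // w x _; exact: prefix_split.
Qed.

Lemma suffix_split w : w <> [::] -> exists r (b : 'I_k) s,
  [/\ w = r ++ b :: s, b \notin s & {subset w <= b :: s}].
Proof.
move=> wn; have [|p [a [q [e na sub]]]] := prefix_split' (w := rev w).
  by move=> h; apply: wn; rewrite -[w]revK h.
exists (rev q), a, (rev p); split.
- by rewrite -[w]revK e rev_cat rev_cons cat_rcons.
- by rewrite mem_rev.
- move=> z zw; have : z \in rev w by rewrite mem_rev.
  by move/sub; rewrite mem_rcons !inE mem_rev.
Qed.


Lemma undup_lt p (a : 'I_k) w : a \notin p -> {subset p <= w} -> a \in w ->
  size (undup p) < size (undup w).
Proof.
move=> na sp aw.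
have := @uniq_leq_size _ (a :: undup p) (undup w).
apply.
  by rewrite /= mem_undup na undup_uniq.
move=> z; rewrite inE mem_undup mem_undup => /orP [/eqP ->|/sp] //.
Qed.

Fixpoint L n := if n is n'.+1 then (L n').*2.+2 else 0.

Lemma short n w : size (undup w) <= n -> exists w', con w w' /\ size w' <= L n.
Proof.
elim: n w => [|n IH] w.
  case: w => [|c w] h; first by exists [::]; split=> //; exact: Gk_refl.
  exfalso; move: h; rewrite leqn0 size_eq0 => /eqP e.
  by move: (mem_undup (c :: w) c); rewrite e inE eqxx.
case: w => [|c w0] h; first by exists [::]; split=> //; exact: Gk_refl.
set w := c :: w0 in h *.
have wn : w <> [::] by [].
have [p [a [q [e na sp]]]] := prefix_split' wn.
have [r [b [s [e' nb ss]]]] := suffix_split wn.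
have hn := normal (X := rcons p a) (q := q) (r := r) (Z := b :: s).
have hw : con w (rcons p a ++ b :: s).
  apply: hn => //; first by case: (p).
  by rewrite cat_rcons.
have aw : a \in w by rewrite e mem_cat inE eqxx orbT.
have bw : b \in w by rewrite e' mem_cat inE eqxx orbT.
have pw : {subset p <= w} by move=> z zp; rewrite e mem_cat zp.
have sw : {subset s <= w} by move=> z zs; rewrite e' mem_cat inE zs !orbT.
have [p' [hp sp']] := IH p (leq_trans (undup_lt na pw aw) h).
have [s' [hs ss']] := IH s (leq_trans (undup_lt nb sw bw) h).
exists (p' ++ [:: a; b] ++ s'); split.
  apply: con_trans hw _; rewrite cat_rcons.
  have -> : p ++ a :: b :: s = p ++ [:: a; b] ++ s by [].
  apply: con_trans (con_r _ hp) _; rewrite !catA; exact: con_l hs.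
rewrite /= !size_cat /=; lia.
Qed.

End Band.

Fixpoint allw (k n : nat) : seq (word k) :=
  if n is n'.+1 then [::] :: [seq x :: w | x <- enum 'I_k, w <- allw k n']
  else [:: [::]].

Lemma mem_allw k n (w : word k) : size w <= n -> w \in allw k n.
Proof.
elim: n w => [|n IH] [|c w] //= h.
rewrite inE; apply/orP; right.
apply: (allpairs_f (fun x w => x :: w)); first by rewrite mem_enum.
exact: IH.
Qed.

Theorem theorem2p10 : Gk_finitely_many_components 3.
Proof.
exists [seq w <- allw 3 (L 3) | w != [::]]; split.
  by move=> r; rewrite mem_filter => /andP [/eqP h _].
move=> w wn.
have hs : size (undup w) <= 3.
  have := @uniq_leq_size _ (undup w) (enum 'I_3) (undup_uniq w).
  rewrite size_enum_ord; apply=> z _; by rewrite mem_enum.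
have [w' [hw hsz]] := short hs.
exists w' => //.
rewrite mem_filter mem_allw // andbT; apply/eqP; exact: con_nil hw wn.
Qed.
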